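(* Let $b$ and $c$ be coprime positive integers with $c$ odd. Then for every integer $q\geq1$ and all $y,z\in\mathbb{R}$, $$2bc^{q}S^{(3)}_{q}(b,c:y,z)-qcb^{q}S^{(4)}_{q}(c,b:z,y)=2\sum_{h=0}^{q}\binom{q}{h}b^{q+1-h}c^{h}\mathcal{E}_{q-h}(z)\mathcal{B}_{h}(y).$$
   Context: $B_n(x)$ is the $n$th Bernoulli polynomial ($\frac{te^{xt}}{e^t-1}=\sum B_n(x)\frac{t^n}{n!}$) and $\mathcal{B}_n(x)=B_n(x-[x])$ the $n$th Bernoulli function ($[x]$ the largest integer $\le x$; $\mathcal{B}_0\equiv1$). $E_n(x)$ is the $n$th Euler polynomial ($\frac{2e^{xt}}{e^t+1}=\sum E_n(x)\frac{t^n}{n!}$), and the Euler function $\mathcal{E}_n$ ($n\ge0$) is defined by $\mathcal{E}_n(x)=E_n(x)$ for $0\le x<1$ and $\mathcal{E}_n(x+m)=(-1)^m\mathcal{E}_n(x)$ for $m\in\mathbb{Z}$. For positive integers $b,c$, an integer $q\ge1$ and real $y,z$, define $$S^{(3)}_{q}(b,c:y,z)=\sum_{\mu=0}^{c-1}(-1)^{\mu}\mathcal{B}_{q}\Big(b\frac{\mu+z}{c}+y\Big)\mathcal{E}_{0}\Big(\frac{\mu+z}{c}\Big),\qquad S^{(4)}_{q}(c,b:z,y)=\sum_{\mu=0}^{b-1}\mathcal{E}_{q-1}\Big(c\frac{\mu+y}{b}+z\Big)\mathcal{E}_{0}\Big(\frac{\mu+y}{b}\Big).$$ *)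

(* Defs.v *)
From HB Require Import structures.
From mathcomp Require Import all_boot all_order all_algebra.
From mathcomp Require Import reals.
Set Implicit Arguments. Unset Strict Implicit. Unset Printing Implicit Defensive.
Import Order.TTheory GRing.Theory Num.Theory.
Local Open Scope ring_scope.

Section Defs.
Variable R : realType.

(* [B_0(x); ...; B_n(x)], using the identity (from t e^{xt} = (e^t-1) sum B_k(x) t^k/k!)
   sum_{k=0}^{n} C(n+1,k) B_k(x) = (n+1) x^n. *)
Fixpoint bern_seq (n : nat) (x : R) : seq R :=
  match n with
  | 0 => [:: 1]
  | n'.+1 => let s := bern_seq n' x in
      rcons s (x ^+ n'.+1 -
        (n'.+2)%:R^-1 * \sum_(k < n'.+1) 'C(n'.+2, k)%:R * nth 0 s k)
  end.

Definition bernoulli_poly (n : nat) (x : R) : R := nth 0 (bern_seq n x) n.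

(* [E_0(x); ...; E_n(x)], using the identity (from 2e^{xt} = (e^t+1) sum E_k(x) t^k/k!)
   sum_{k=0}^{n} C(n,k) E_k(x) + E_n(x) = 2 x^n. *)
Fixpoint euler_seq (n : nat) (x : R) : seq R :=
  match n with
  | 0 => [:: 1]
  | n'.+1 => let s := euler_seq n' x in
      rcons s (x ^+ n'.+1 -
        2^-1 * \sum_(k < n'.+1) 'C(n'.+1, k)%:R * nth 0 s k)
  end.

Definition euler_poly (n : nat) (x : R) : R := nth 0 (euler_seq n x) n.

Definition bernoulli_fun (n : nat) (x : R) : R :=
  bernoulli_poly n (x - (Num.floor x)%:~R).

Definition euler_fun (n : nat) (x : R) : R :=
  (-1) ^ (Num.floor x) * euler_poly n (x - (Num.floor x)%:~R).

Definition S3 (q b c : nat) (y z : R) : R :=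
  \sum_(mu < c) (-1) ^+ mu *
    bernoulli_fun q (b%:R * ((mu%:R + z) / c%:R) + y) *
    euler_fun 0 ((mu%:R + z) / c%:R).

Definition S4 (q c b : nat) (z y : R) : R :=
  \sum_(mu < b)
    euler_fun q.-1 (c%:R * ((mu%:R + y) / b%:R) + z) *
    euler_fun 0 ((mu%:R + y) / b%:R).

End Defs.

(* Main.v *)
Require Import Defs.
From HB Require Import structures.
From mathcomp Require Import all_boot all_order all_algebra.
From mathcomp Require Import reals.
From mathcomp Require Import ring lra zify.
Import Order.TTheory GRing.Theory Num.Theory.
Set Implicit Arguments. Unset Strict Implicit. Unset Printing Implicit Defensive.
Local Open Scope ring_scope.

Section P1.
Variable R : realType.
Implicit Types (p q r : {poly R}).

Lemma size_bern n (x : R) : size (bern_seq n x) = n.+1.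
Proof. by elim: n => //= n IH; rewrite size_rcons IH. Qed.

Lemma nth_bern n k (x : R) : (k <= n)%N -> nth 0 (bern_seq n x) k = bernoulli_poly k x.
Proof.
elim: n => [|n IH]; first by rewrite leqn0 => /eqP ->.
rewrite leq_eqVlt => /orP [/eqP -> //|]; rewrite ltnS => hk.
by rewrite /= nth_rcons size_bern ltnS hk IH.
Qed.

Lemma size_euler n (x : R) : size (euler_seq n x) = n.+1.
Proof. by elim: n => //= n IH; rewrite size_rcons IH. Qed.

Lemma nth_euler n k (x : R) : (k <= n)%N -> nth 0 (euler_seq n x) k = euler_poly k x.
Proof.
elim: n => [|n IH]; first by rewrite leqn0 => /eqP ->.
rewrite leq_eqVlt => /orP [/eqP -> //|]; rewrite ltnS => hk.
by rewrite /= nth_rcons size_euler ltnS hk IH.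
Qed.

Lemma bern_rec m (x : R) :
  \sum_(k < m.+1) 'C(m.+1, k)%:R * bernoulli_poly k x = m.+1%:R * x ^+ m.
Proof.
case: m => [|m]; first by rewrite big_ord1 bin0 /bernoulli_poly /= expr0 !mulr1.
rewrite big_ord_recr /=.
have -> : bernoulli_poly m.+1 x = x ^+ m.+1 -
   (m.+2)%:R^-1 * \sum_(k < m.+1) 'C(m.+2, k)%:R * bernoulli_poly k x.
  rewrite {1}/bernoulli_poly /= nth_rcons size_bern ltnn eqxx; congr (_ - _ * _).
  by apply: eq_bigr => k _; rewrite nth_bern // -ltnS.
rewrite binSn mulrBr mulrA divff ?pnatr_eq0 // mul1r; ring.
Qed.

Lemma euler_rec m (x : R) :
  \sum_(k < m.+1) 'C(m, k)%:R * euler_poly k x + euler_poly m x = 2 * x ^+ m.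
Proof.
case: m => [|m]; first by rewrite big_ord1 bin0 /euler_poly /= expr0 !mulr1 -[2]/(1+1).
rewrite big_ord_recr /= binn.
have -> : euler_poly m.+1 x = x ^+ m.+1 -
   2^-1 * \sum_(k < m.+1) 'C(m.+1, k)%:R * euler_poly k x.
  rewrite {1}/euler_poly /= nth_rcons size_euler ltnn eqxx; congr (_ - _ * _).
  by apply: eq_bigr => k _; rewrite nth_euler // -ltnS.
set S := \sum_(_ < _) _.
have h2 : (2 : R) != 0 by rewrite pnatr_eq0.
by field.
Qed.


Definition eqN (N : nat) p q := forall k, (k < N)%N -> p`_k = q`_k.

Lemma eqN_refl N p : eqN N p p. Proof. by []. Qed.
Lemma eqN_sym N p q : eqN N p q -> eqN N q p.
Proof. by move=> h k hk; rewrite h. Qed.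
Lemma eqN_trans N p q r : eqN N p q -> eqN N q r -> eqN N p r.
Proof. by move=> h1 h2 k hk; rewrite h1 // h2. Qed.
Lemma eqN_mull N r p q : eqN N p q -> eqN N (r * p) (r * q).
Proof.
move=> h k hk; rewrite !coefM; apply: eq_bigr => j _; rewrite h //.
exact: leq_ltn_trans (leq_subr _ _) hk.
Qed.
Lemma eqN_mulr N r p q : eqN N p q -> eqN N (p * r) (q * r).
Proof. by move=> h; rewrite ![_ * r]mulrC; apply: eqN_mull. Qed.
Lemma eqN_add N p1 p2 q1 q2 : eqN N p1 q1 -> eqN N p2 q2 -> eqN N (p1 + p2) (q1 + q2).
Proof. by move=> h1 h2 k hk; rewrite !coefD h1 // h2. Qed.
Lemma eqN_sub N p1 p2 q1 q2 : eqN N p1 q1 -> eqN N p2 q2 -> eqN N (p1 - p2) (q1 - q2).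
Proof. by move=> h1 h2 k hk; rewrite !coefB h1 // h2. Qed.
Lemma eqN_scale N a p q : eqN N p q -> eqN N (a *: p) (a *: q).
Proof. by move=> h k hk; rewrite !coefZ h. Qed.
Lemma eqN_sum N (I : finType) (P : pred I) (F G : I -> {poly R}) :
  (forall i, P i -> eqN N (F i) (G i)) -> eqN N (\sum_(i | P i) F i) (\sum_(i | P i) G i).
Proof.
move=> h k hk; rewrite !coef_sum; apply: eq_bigr => i Pi; exact: h.
Qed.
Lemma eqN_eq N p q : p = q -> eqN N p q. Proof. by move->. Qed.

Definition ex N (a : R) : {poly R} := \poly_(k < N) (a ^+ k / k`!%:R).

Lemma factR_neq0 n : (n`!%:R : R) != 0.
Proof. by rewrite pnatr_eq0 -lt0n fact_gt0. Qed.

Lemma termC (s X : R) k j : (j <= k)%N ->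
  (s ^+ j * X / j`!%:R) * (s ^+ (k - j) / (k - j)`!%:R) =
  s ^+ k / k`!%:R * ('C(k, j)%:R * X).
Proof.
move=> hjk.
have hb : 'C(k, j)%:R * (j`!%:R * (k - j)`!%:R) = k`!%:R :> R.
  by rewrite -natrM -natrM bin_fact.
have -> : s ^+ k = s ^+ j * s ^+ (k - j) by rewrite -exprD subnKC.
have h1 := factR_neq0 j; have h2 := factR_neq0 (k - j); have h3 := factR_neq0 k.
rewrite -hb. field. by rewrite h1 h2 pnatr_eq0 -lt0n bin_gt0 hjk.
Qed.

Lemma ex_mul N a b : eqN N (ex N a * ex N b) (ex N (a + b)).
Proof.
move=> k hk; rewrite coefM coef_poly hk addrC exprDn mulr_suml.
apply: eq_bigr => [[j /=]]; rewrite ltnS => hj _.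
rewrite !coef_poly (leq_ltn_trans hj hk) (leq_ltn_trans (leq_subr _ _) hk).
rewrite -mulr_natr.
have hb : ('C(k, j)%:R * (j`!%:R * (k - j)`!%:R) = k`!%:R :> R) by rewrite -natrM -natrM bin_fact.
have h1 := factR_neq0 j; have h2 := factR_neq0 (k - j).
rewrite -hb; field; by rewrite h1 h2 pnatr_eq0 -lt0n bin_gt0 hj.
Qed.

Lemma coef_ex N a k : (ex N a)`_k = if (k < N)%N then a ^+ k / k`!%:R else 0.
Proof. exact: coef_poly. Qed.

Definition pB N (s u : R) := \poly_(k < N) (s ^+ k * bernoulli_poly k u / k`!%:R).
Definition pE N (s u : R) := \poly_(k < N) (s ^+ k * euler_poly k u / k`!%:R).

Lemma pB_rel N s u : eqN N (pB N s u * (ex N s - 1)) ('X * (s *: ex N (s * u))).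
Proof.
move=> k hk; rewrite coefXM coefM.
case: k hk => [|m] hk.
  by rewrite big_ord1 subnn coefB coef1 coef_ex coef_poly hk /= fact0 !expr0 invr1 !mulr1 subrr mulr0.
rewrite big_ord_recr /= coefB coef1 subnn coef_ex coef_poly hk /= fact0 !expr0 invr1.
have hN : (0 < N)%N by apply: leq_trans hk.
rewrite hN mulr1 subrr mulr0 addr0.
rewrite coefZ coef_ex (ltnW hk).
transitivity (s ^+ m.+1 / m.+1`!%:R * \sum_(j < m.+1) 'C(m.+1, j)%:R * bernoulli_poly j u).
  rewrite mulr_sumr; apply: eq_bigr => [[j /=]] hj _.
  rewrite coefB coef1 subn_eq0 leqNgt hj /= subr0 coef_ex coef_poly.
  rewrite (ltn_trans hj hk) (leq_ltn_trans (leq_subr _ _) hk).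
  by rewrite termC // ltnW.
rewrite bern_rec factS natrM exprS exprMn.
have h1 := factR_neq0 m; have h2 : (m.+1%:R : R) != 0 by rewrite pnatr_eq0.
field. by rewrite h1 addrC natr1.
Qed.

Lemma pE_rel N s u : eqN N (pE N s u * (ex N s + 1)) (2 *: ex N (s * u)).
Proof.
move=> k hk; rewrite coefM coefZ coef_poly hk.
transitivity (s ^+ k / k`!%:R * (\sum_(j < k.+1) 'C(k, j)%:R * euler_poly j u + euler_poly k u)).
  rewrite mulrDr mulr_sumr big_ord_recr [in RHS]big_ord_recr /= -addrA; congr (_ + _).
    apply: eq_bigr => [[j /=]] hj _.
    rewrite coefD coef1 subn_eq0 leqNgt hj /= addr0 !coef_poly.
    rewrite (ltn_trans hj hk) (leq_ltn_trans (leq_subr _ _) hk).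
    by rewrite termC // ltnW.
  rewrite coefD coef1 subnn !coef_poly hk /= expr0 invr1 mulr1 binn.
  have hN : (0 < N)%N by apply: leq_ltn_trans (leq0n k) hk.
  by rewrite hN mul1r; field; rewrite factR_neq0.
rewrite (euler_rec k u) exprMn.
by field; rewrite factR_neq0.
Qed.

End P1.

Section P2.
Variable R : realType.
Implicit Types (p q r : {poly R}).

Lemma sizeD_le n p q : (size p <= n)%N -> (size q <= n)%N -> (size (p + q)%R <= n)%N.
Proof. by move=> h1 h2; apply: leq_trans (size_polyD _ _) _; rewrite geq_max h1. Qed.
Lemma sizeB_le n p q : (size p <= n)%N -> (size q <= n)%N -> (size (p - q)%R <= n)%N.
Proof. by move=> h1 h2; apply: sizeD_le; rewrite ?size_polyN. Qed.
Lemma sizeM_le m n p q : (size p <= m.+1)%N -> (size q <= n)%N -> (size (p * q)%R <= m + n)%N.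
Proof.
move=> h1 h2; apply: leq_trans (size_polyMleq _ _) _.
lia.
Qed.

Lemma Xb1_dvd (b c : nat) : odd c -> ('X^b + 1 : {poly R}) %| 'X^(b * c) + 1.
Proof.
move=> oc; apply/dvdpP.
have := subrXX ('X^b : {poly R}) (-1) c.
rewrite -signr_odd oc expr1 opprK -exprM => ->.
by exists (\sum_(i < c) ('X^b) ^+ (c.-1 - i) * (-1) ^+ i); rewrite mulrC.
Qed.

Lemma Xc1_dvd (b c : nat) : ('X^c - 1 : {poly R}) %| 'X^(c * b) - 1.
Proof.
apply/dvdpP.
have := subrXX ('X^c : {poly R}) 1 b.
rewrite expr1n -exprM => ->.
by exists (\sum_(i < b) ('X^c) ^+ (b.-1 - i) * 1 ^+ i); rewrite mulrC.
Qed.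

Lemma polyid (b c : nat) (A B G : {poly R}) :
  (0 < b)%N -> (0 < c)%N -> odd c -> (size A <= c)%N -> (size B <= b)%N ->
  (size G <= b + c)%N ->
  ('X^c - 1) %| ('X^b + 1) * A - G -> ('X^b + 1) %| ('X^c - 1) * B + G ->
  ('X^b + 1) * A - ('X^c - 1) * B = G.
Proof.
move=> hb hc oc sA sB sG d1 d2.
set D := ('X^b + 1) * A - ('X^c - 1) * B - G.
suff : D = 0 by move/eqP; rewrite subr_eq0 => /eqP.
have hD1 : ('X^c - 1) %| D.
  have -> : D = (('X^b + 1) * A - G) - ('X^c - 1) * B by rewrite /D; ring.
  by apply: dvdp_sub => //; apply: dvdp_mulIl.
have hD2 : ('X^b + 1) %| D.
  have -> : D = ('X^b + 1) * A - (('X^c - 1) * B + G) by rewrite /D; ring.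
  by apply: dvdp_sub => //; apply: dvdp_mulIl.
have sXb : size ('X^b + 1 : {poly R}) = b.+1 by rewrite -polyC1 size_XnaddC.
have sXc : size ('X^c - 1 : {poly R}) = c.+1 by rewrite size_Xn_sub_1.
have sD : (size D <= b + c)%N.
  apply: sizeB_le => //; apply: sizeB_le.
    by apply: sizeM_le; rewrite ?sXb.
  by rewrite addnC; apply: sizeM_le; rewrite ?sXc.
case/dvdpP: hD1 => P hP.
have Xc0 : ('X^c - 1 : {poly R}) != 0 by rewrite -size_poly_eq0 sXc.
have Xb0 : ('X^b + 1 : {poly R}) != 0 by rewrite -size_poly_eq0 sXb.
have [P00|P0] := eqVneq P 0; first by rewrite hP P00 mul0r.
have sP : (size P <= b)%N.
  move: sD; rewrite hP size_mul // sXc addnS /=.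
  by rewrite leq_add2r.
exfalso.
have : ('X^b + 1) %| P.
  have h2 : ('X^b + 1 : {poly R}) %| (2%:P) * P.
    have hQ := Xc1_dvd b c; case/dvdpP: hQ => Q hQ.
    have -> : 2%:P * P = P * ('X^(b * c) + 1) - (P * ('X^c - 1)) * Q.
      rewrite -mulrA [_ * Q]mulrC -hQ mulnC; rewrite (_ : 2%:P = 1 + 1 :> {poly R}); last first.
        by rewrite -polyC1 -polyCD.
      ring.
    apply: dvdp_sub; first by apply: dvdp_mull; apply: Xb1_dvd.
    by rewrite -hP; apply: dvdp_mulr.
  by move: h2; rewrite mul_polyC dvdpZr // pnatr_eq0.
move/(dvdp_leq P0); rewrite sXb ltnNge; by rewrite sP.
Qed.


Definition Lf (N n : nat) (th : R) (p : {poly R}) : R :=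
  \sum_(k < N) p`_k * (th + k%:R) ^+ n.

Lemma Lf_D N n th p q : Lf N n th (p + q) = Lf N n th p + Lf N n th q.
Proof. by rewrite /Lf -big_split; apply: eq_bigr => k _; rewrite coefD mulrDl. Qed.
Lemma Lf_Z N n th a p : Lf N n th (a *: p) = a * Lf N n th p.
Proof. by rewrite /Lf mulr_sumr; apply: eq_bigr => k _; rewrite coefZ mulrA. Qed.
Lemma Lf_N N n th p : Lf N n th (- p) = - Lf N n th p.
Proof. by rewrite -scaleN1r Lf_Z mulN1r. Qed.
Lemma Lf_B N n th p q : Lf N n th (p - q) = Lf N n th p - Lf N n th q.
Proof. by rewrite Lf_D Lf_N. Qed.
Lemma Lf_0 N n th : Lf N n th 0 = 0.
Proof. by rewrite /Lf big1 // => k _; rewrite coef0 mul0r. Qed.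
Lemma Lf_sum N n th (I : finType) (F : I -> {poly R}) :
  Lf N n th (\sum_i F i) = \sum_i Lf N n th (F i).
Proof. exact: (big_morph _ (Lf_D N n th) (Lf_0 N n th)). Qed.
Lemma Lf_X N n th j : (j < N)%N -> Lf N n th 'X^j = (th + j%:R) ^+ n.
Proof.
move=> hj; rewrite /Lf (bigD1 (Ordinal hj)) //= coefXn eqxx mul1r big1 ?addr0 //.
move=> k hk; rewrite coefXn; case: eqP => [ekj|]; last by rewrite mul0r.
by move: hk; rewrite -val_eqE /= ekj eqxx.
Qed.

Lemma star_abstract (b c T : nat) (th s : R) (eps : 'I_c -> R) (m : 'I_c -> nat)
   (del : 'I_b -> R) (nn : 'I_b -> nat) :
  (0 < b)%N -> (0 < c)%N -> odd c -> (T < b + c)%N ->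
  (forall mu, m mu < c)%N -> (forall nu, nn nu < b)%N ->
  ('X^c - 1) %| ('X^b + 1) * (\sum_mu eps mu *: 'X^(m mu)) - (2 * s) *: 'X^T ->
  ('X^b + 1) %| ('X^c - 1) * (\sum_nu del nu *: 'X^(nn nu)) + (2 * s) *: 'X^T ->
  forall n,
  \sum_mu eps mu * ((th + (m mu)%:R + b%:R) ^+ n + (th + (m mu)%:R) ^+ n)
  - \sum_nu del nu * ((th + (nn nu)%:R + c%:R) ^+ n - (th + (nn nu)%:R) ^+ n)
  = 2 * s * (th + T%:R) ^+ n.
Proof.
move=> hb hc oc hT hm hn d1 d2 n.
have sX : forall j, (size ('X^j : {poly R}) = j.+1) by move=> j; rewrite size_polyXn.
have sum_le : forall (I : finType) (F : I -> {poly R}) k,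
    (forall i, size (F i) <= k)%N -> (size (\sum_i F i)%R <= k)%N.
  move=> I F k hF; elim/big_ind: _ => //; first by rewrite size_poly0.
  by move=> p q; apply: sizeD_le.
have sA : (size (\sum_mu eps mu *: 'X^(m mu))%R <= c)%N.
  by apply: sum_le => i; apply: leq_trans (size_scale_leq _ _) _; rewrite sX.
have sB : (size (\sum_nu del nu *: 'X^(nn nu))%R <= b)%N.
  by apply: sum_le => i; apply: leq_trans (size_scale_leq _ _) _; rewrite sX.
have sG : (size ((2 * s) *: 'X^T : {poly R})%R <= b + c)%N.
  by apply: leq_trans (size_scale_leq _ _) _; rewrite sX.
have H := congr1 (Lf (b + c) n th) (@polyid b c _ _ _ hb hc oc sA sB sG d1 d2).
rewrite -[RHS](_ : Lf (b + c) n th ((2 * s) *: 'X^T) = _); last first.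
  by rewrite Lf_Z Lf_X.
rewrite -H.
rewrite Lf_B !mulr_sumr !Lf_sum; congr (_ - _); apply: eq_bigr => i _.
  have hmi := hm i.
  rewrite -scalerAr Lf_Z mulrDl mul1r -exprD Lf_D !Lf_X; try lia.
  by congr (_ * (_ ^+ _ + _)); rewrite natrD; ring.
have hni := hn i.
rewrite -scalerAr Lf_Z mulrBl mul1r -exprD Lf_B !Lf_X; try lia.
by congr (_ * (_ ^+ _ - _)); rewrite natrD; ring.
Qed.

End P2.

Section P3.
Variable R : realType.
Implicit Types (p q r : {poly R}).

Lemma Xb1_dvdn (b n : nat) : ('X^b + 1 : {poly R}) %| ('X^b) ^+ n - (-1) ^+ n.
Proof.
apply/dvdpP; rewrite subrXX opprK.
by exists (\sum_(i < n) ('X^b) ^+ (n.-1 - i) * (-1) ^+ i); rewrite mulrC.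
Qed.

Lemma dvdXc (c e1 e2 : nat) (k : int) :
  e1%:Z = e2%:Z + k * c%:Z -> ('X^c - 1 : {poly R}) %| 'X^e1 - 'X^e2.
Proof.
have gen : forall (f1 f2 n : nat), f1 = (f2 + n * c)%N ->
    ('X^c - 1 : {poly R}) %| 'X^f1 - 'X^f2.
  move=> f1 f2 n ->.
  have -> : 'X^(f2 + n * c) - 'X^f2 = 'X^f2 * ('X^(c * n) - 1) :> {poly R}.
    by rewrite mulrBr mulr1 -exprD mulnC.
  by apply: dvdp_mull; apply: Xc1_dvd.
case: k => n h.
  by apply: (gen _ _ n); lia.
rewrite -dvdpNr opprB; apply: (gen _ _ n.+1).
move: h; rewrite NegzE; lia.
Qed.

Lemma sgnD (a b : int) : ((-1) ^ (a + b) : R) = (-1) ^ a * (-1) ^ b.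
Proof. by rewrite exprzDr // unitrN1. Qed.

Lemma sgn_even (a m : int) : ((-1) ^ (a + m * 2) : R) = (-1) ^ a.
Proof.
rewrite sgnD [m * 2]mulrC -exprz_exp.
have -> : ((-1) ^ (2 : int) : R) = 1 by rewrite -exprnP expr2 mulrNN mulr1.
by rewrite exp1rz mulr1.
Qed.

Lemma scale_sign n p : ((-1) ^+ n : R) *: p = (-1) ^+ n * p.
Proof. by rewrite -mul_polyC rmorph_sign. Qed.

Lemma dvdXb (b e1 e2 : nat) (k : int) :
  e1%:Z = e2%:Z + k * b%:Z -> ('X^b + 1 : {poly R}) %| 'X^e1 - ((-1) ^ k : R) *: 'X^e2.
Proof.
have gen : forall (f1 f2 n : nat), f1 = (f2 + n * b)%N ->
    ('X^b + 1 : {poly R}) %| 'X^f1 - ((-1) ^+ n : R) *: 'X^f2.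
  move=> f1 f2 n ->.
  have -> : 'X^(f2 + n * b) - ((-1) ^+ n : R) *: 'X^f2 =
      'X^f2 * (('X^b) ^+ n - (-1) ^+ n) :> {poly R}.
    by rewrite scale_sign mulrBr exprD -exprM mulnC [_ * 'X^f2]mulrC.
  by apply: dvdp_mull; apply: Xb1_dvdn.
case: k => n h.
  by rewrite -exprnP; apply: gen; lia.
have h2 : e2 = (e1 + n.+1 * b)%N by move: h; rewrite NegzE; lia.
have := gen _ _ _ h2.
set s := ((-1) ^+ n.+1 : R).
have -> : ((-1) ^ Negz n : R) = s.
  by rewrite NegzE -exprz_inv invrN1 -exprnP.
have ss : s * s = 1 by rewrite /s -exprMn mulrNN mulr1 expr1n.
have -> : 'X^e1 - s *: 'X^e2 = (- s) *: ('X^e2 - s *: 'X^e1) :> {poly R}.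
  by rewrite scalerBr !scaleNr scalerA ss scale1r opprK addrC.
rewrite dvdpZr //; apply/eqP => /eqP; rewrite oppr_eq0 => /eqP s0.
by move: ss; rewrite s0 mul0r => /eqP; rewrite eq_sym oner_eq0.
Qed.

Lemma rot_sum (c : nat) (F : int -> {poly R}) :
  (forall j, F (j + c%:Z) = F j) ->
  forall a : int, \sum_(mu < c) F (mu%:Z + a) = \sum_(mu < c) F mu%:Z.
Proof.
move=> hF.
have per : forall j (n : nat), F (j + Posz (n * c)%N) = F j.
  move=> j; elim=> [|n IH]; first by rewrite mul0n addr0.
  by rewrite -[RHS]IH -[RHS]hF; congr F; lia.
have natc : forall n : nat, \sum_(mu < c) F (mu%:Z + n%:Z) = \sum_(mu < c) F mu%:Z.
  elim=> [|n IH]; first by apply: eq_bigr => i _; rewrite addr0.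
  rewrite -[RHS]IH.
  case: c hF per IH => [|c'] hF per IH; first by rewrite !big_ord0.
  rewrite big_ord_recr [in RHS]big_ord_recl /= addrC; congr (_ + _).
    by rewrite -(hF (0%:Z + n%:Z)); congr F; lia.
  by apply: eq_bigr => i _; congr F; rewrite /bump /=; lia.
move=> a.
case: c hF per natc => [|c'] hF per natc; first by rewrite !big_ord0.
pose n := `|a|%N.
have [m hm] : exists m : nat, a + Posz (n * c'.+1)%N = Posz m.
  by exists (absz (a + Posz (n * c'.+1)%N)); rewrite /n; lia.
rewrite -(natc m); apply: eq_bigr => i _.
by rewrite -(per _ n) -addrA hm.
Qed.

Lemma tele_A (b T n : nat) :
  ('X^b + 1) * (\sum_(j < n) ((-1) ^+ j : R) *: 'X^(T + b * j)) =
  'X^T - ((-1) ^+ n : R) *: 'X^(T + b * n) :> {poly R}.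
Proof.
elim: n => [|n IH]; first by rewrite big_ord0 mulr0 expr0 scale1r muln0 addn0 subrr.
rewrite big_ord_recr /= mulrDr IH.
have -> : 'X^(T + b * n.+1) = 'X^b * 'X^(T + b * n) :> {poly R}.
  by rewrite -exprD; congr (_ ^+ _); rewrite mulnS; lia.
rewrite !scale_sign exprS; ring.
Qed.

Lemma tele_B (c T n : nat) :
  ('X^c - 1) * (\sum_(i < n) 'X^(T + c * i)) = 'X^(T + c * n) - 'X^T :> {poly R}.
Proof.
elim: n => [|n IH]; first by rewrite big_ord0 mulr0 muln0 addn0 subrr.
rewrite big_ord_recr /= mulrDr IH.
have -> : 'X^(T + c * n.+1) = 'X^c * 'X^(T + c * n) :> {poly R}.
  by rewrite -exprD; congr (_ ^+ _); rewrite mulnS; lia.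
ring.
Qed.

Lemma dvdp_sumP (d : {poly R}) (I : finType) (F : I -> {poly R}) :
  (forall i, d %| F i) -> d %| \sum_i F i.
Proof.
move=> h; apply: (big_ind (fun p => d %| p)) => //.
by move=> p q; apply: dvdp_add.
Qed.

Lemma dvdp_scale (d p : {poly R}) (a : R) : d %| p -> d %| a *: p.
Proof. by move=> h; rewrite -mul_polyC; apply: dvdp_mull. Qed.

Lemma divA (b c T : nat) (Z0 Y0 : int) (eps : 'I_c -> R) (m : 'I_c -> nat)
    (W : 'I_c -> int) :
  (0 < c)%N -> odd c ->
  (forall mu : 'I_c, (m mu)%:Z = T%:Z + b%:Z * (mu%:Z + Z0) + c%:Z * (Y0 - W mu)) ->
  (forall mu : 'I_c, eps mu = (-1) ^+ mu * (-1) ^ ((mu%:Z + Z0) %/ c%:Z)%Z) ->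
  ('X^c - 1) %| ('X^b + 1) * (\sum_mu eps mu *: 'X^(m mu)) - (2 * (-1) ^ Z0) *: 'X^T.
Proof.
move=> hc oc hm heps.
set s : R := (-1) ^ Z0.
pose F (j : int) : {poly R} :=
  ((-1) ^ (j %% c%:Z)%Z : R) *: 'X^(T + b * absz (j %% c%:Z)%Z).
have hF : forall j, F (j + c%:Z) = F j.
  by move=> j; rewrite /F modzDr.
have c0 : c%:Z != 0 by rewrite eqz_nat -lt0n.
have d1 : ('X^c - 1) %| (\sum_mu eps mu *: 'X^(m mu)) - s *: \sum_(mu < c) F (mu%:Z + Z0).
  rewrite scaler_sumr -sumrB; apply: dvdp_sumP => mu.
  set j := mu%:Z + Z0.
  have ej := divz_eq j c%:Z.
  set t := (j %/ c%:Z)%Z in ej; set r := (j %% c%:Z)%Z in ej.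
  have r0 : 0 <= r by apply: modz_ge0.
  have rc : r < c%:Z by apply: ltz_pmod; rewrite ltz_nat.
  have hr : (absz r)%:Z = r by apply: gez0_abs.
  have [h2 hh2] : exists h : int, c%:Z + 1 = h * 2.
    exists (Posz (c./2).+1); have := odd_double_half c; rewrite oc -muln2 /=; lia.
  have es : eps mu = s * (-1) ^ r.
    rewrite heps /s exprnP -/t -sgnD -sgnD -[RHS](sgn_even _ (t * h2 - Z0)).
    congr (_ ^ _); rewrite mulrBl -mulrA -hh2 mulrDr mulr1.
    by move: ej; rewrite /j; lia.
  rewrite /F -/r es -scalerA -scalerBr; apply: dvdp_scale.
  rewrite -scalerBr; apply: dvdp_scale.
  apply: (@dvdXc c _ _ (b%:Z * t + Y0 - W mu)).
  by rewrite hm PoszD PoszM hr; move: ej; rewrite /j; lia.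
have e2 : \sum_(mu < c) F (mu%:Z + Z0) = \sum_(j < c) ((-1) ^+ j : R) *: 'X^(T + b * j).
  rewrite (@rot_sum c F hF); apply: eq_bigr => j _.
  rewrite /F modz_small; last by apply/andP; split => //; rewrite ltz_nat.
  by rewrite -exprnP.
have e3 := tele_A b T c.
rewrite e2 in d1.
have -> : ('X^b + 1) * (\sum_mu eps mu *: 'X^(m mu)) - (2 * s) *: 'X^T =
   ('X^b + 1) * ((\sum_mu eps mu *: 'X^(m mu)) - s *: \sum_(j < c) ((-1) ^+ j : R) *: 'X^(T + b * j))
   + s *: ('X^(T + b * c) - 'X^T).
  rewrite mulrBr -scalerAr e3 -signr_odd oc expr1 scaleN1r.
  rewrite (_ : 2 * s = s + s) ?scalerDl ?scalerBr ?scalerN; last by ring.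
  ring.
apply: dvdp_add; first exact: dvdp_mull.
apply: dvdp_scale; apply: (@dvdXc c _ _ (Posz b)).
by rewrite PoszD PoszM mulrC.
Qed.

Lemma divB (b c T : nat) (Z0 Y0 : int) (del : 'I_b -> R) (nn : 'I_b -> nat)
    (V : 'I_b -> int) :
  (0 < b)%N -> odd c ->
  (forall nu : 'I_b, (nn nu)%:Z = T%:Z + c%:Z * (nu%:Z + Y0) + b%:Z * (Z0 - V nu)) ->
  (forall nu : 'I_b, del nu = (-1) ^ ((nu%:Z + Y0) %/ b%:Z)%Z * (-1) ^ (V nu)) ->
  ('X^b + 1) %| ('X^c - 1) * (\sum_nu del nu *: 'X^(nn nu)) + (2 * (-1) ^ Z0) *: 'X^T.
Proof.
move=> hb oc hn hdel.
set s : R := (-1) ^ Z0.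
pose H (j : int) : {poly R} := 'X^(T + c * absz (j %% b%:Z)%Z).
have hH : forall j, H (j + b%:Z) = H j.
  by move=> j; rewrite /H modzDr.
have b0 : b%:Z != 0 by rewrite eqz_nat -lt0n.
have [h2 hh2] : exists h : int, c%:Z + 1 = h * 2.
  exists (Posz (c./2).+1); have := odd_double_half c; rewrite oc -muln2 /=; lia.
have d1 : ('X^b + 1) %| (\sum_nu del nu *: 'X^(nn nu)) - s *: \sum_(nu < b) H (nu%:Z + Y0).
  rewrite scaler_sumr -sumrB; apply: dvdp_sumP => nu.
  set j := nu%:Z + Y0.
  have ej := divz_eq j b%:Z.
  set t := (j %/ b%:Z)%Z in ej; set r := (j %% b%:Z)%Z in ej.
  have r0 : 0 <= r by apply: modz_ge0.
  have hr : (absz r)%:Z = r by apply: gez0_abs.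
  set k := c%:Z * t + Z0 - V nu.
  have hk : ((nn nu)%:Z = (T + c * absz r)%N%:Z + k * b%:Z).
    by rewrite hn PoszD PoszM hr /k; move: ej; rewrite /j; lia.
  have dk := @dvdXb b _ _ _ hk.
  have es : del nu * (-1) ^ k = s.
    rewrite hdel /s -/t -!sgnD -[RHS](sgn_even _ (t * h2)).
    congr (_ ^ _); rewrite -mulrA -hh2 mulrDr mulr1 /k; lia.
  have -> : del nu *: 'X^(nn nu) - s *: H j =
      del nu *: ('X^(nn nu) - ((-1) ^ k : R) *: 'X^(T + c * absz r)).
    by rewrite scalerBr scalerA es.
  exact: dvdp_scale.
have e2 : \sum_(nu < b) H (nu%:Z + Y0) = \sum_(i < b) 'X^(T + c * i).
  rewrite (@rot_sum b H hH); apply: eq_bigr => i _.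
  by rewrite /H modz_small //; apply/andP; split => //; rewrite ltz_nat.
have e3 := tele_B c T b.
rewrite e2 in d1.
have -> : ('X^c - 1) * (\sum_nu del nu *: 'X^(nn nu)) + (2 * s) *: 'X^T =
   ('X^c - 1) * ((\sum_nu del nu *: 'X^(nn nu)) - s *: \sum_(i < b) 'X^(T + c * i))
   + s *: ('X^(T + c * b) - ((-1) ^ (Posz c) : R) *: 'X^T).
  rewrite mulrBr -scalerAr e3 -exprnP -signr_odd oc expr1 scaleN1r.
  rewrite (_ : 2 * s = s + s) ?scalerDl ?scalerBr ?scalerN; last by ring.
  ring.
apply: dvdp_add; first exact: dvdp_mull.
apply: dvdp_scale; apply: dvdXb.
by rewrite PoszD PoszM mulrC.
Qed.

End P3.

Unset Implicit Arguments.

Section P4.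
Variable R : realType.
Implicit Types (p q r : {poly R}).

Definition sg (x : R) : R := (-1) ^ (Num.floor x).
Definition frac (x : R) : R := x - (Num.floor x)%:~R.

Lemma frac_ge0 x : 0 <= frac x.
Proof. by rewrite /frac subr_ge0 floor_le. Qed.
Lemma frac_lt1 x : frac x < 1.
Proof. by have := floorD1_gt x; rewrite intrD /frac; lra. Qed.

Lemma pBf_rel N s x :
  eqN N (\poly_(k < N) (s ^+ k * bernoulli_fun k x / k`!%:R) * (ex N s - 1))
        ('X * (s *: ex N (s * frac x))).
Proof. exact: pB_rel. Qed.

Lemma pEf_rel N s x :
  eqN N (\poly_(k < N) (s ^+ k * euler_fun k x / k`!%:R) * (ex N s + 1))
        ((2 * sg x) *: ex N (s * frac x)).
Proof.
have -> : \poly_(k < N) (s ^+ k * euler_fun k x / k`!%:R) = sg x *: pE N s (frac x).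
  apply/polyP => k; rewrite coefZ !coef_poly; case: ifP => _; last by rewrite mulr0.
  by rewrite /euler_fun /sg /frac; ring.
rewrite -scalerAl [2 * _]mulrC -scalerA; apply: eqN_scale; exact: pE_rel.
Qed.

Lemma eqN_cancel N (a p : {poly R}) :
  a`_0 = 0 -> a`_1 != 0 -> eqN N.+1 (a * p) 0 -> eqN N p 0.
Proof.
move=> a0 a1 h k; elim/ltn_ind: k => k IH hk.
have := h k.+1; rewrite ltnS coef0 => /(_ hk).
rewrite coefM big_ord_recl big_ord_recl a0 mul0r add0r /= big1.
  rewrite addr0 subSS subn0 => /eqP; rewrite mulf_eq0 (negbTE a1) /= => /eqP ->.
  by rewrite coef0.
move=> [i hi] _; rewrite /bump /= !add1n subSS.
rewrite IH ?coef0 ?mulr0 //; first by lia.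
by apply: leq_ltn_trans hk; apply: leq_subr.
Qed.

Lemma floor_shift (m : int) (d : nat) (f : R) :
  (0 < d)%N -> 0 <= f -> f < 1 -> Num.floor ((m%:~R + f) / d%:R) = (m %/ d%:Z)%Z.
Proof.
move=> hd f0 f1; apply: floor_def.
have ej := divz_eq m d%:Z.
set t := (m %/ d%:Z)%Z in ej *; set r := (m %% d%:Z)%Z in ej.
have r0 : 0 <= r by apply: modz_ge0; rewrite eqz_nat -lt0n.
have rlt : r < d%:Z by apply: ltz_pmod; rewrite ltz_nat.
have rd : r + 1 <= d%:Z by lia.
have r0R : 0 <= r%:~R :> R by rewrite ler0z.
have rdR : r%:~R + 1 <= d%:R :> R.
  by rewrite pmulrn -[1]/(1%:~R) -intrD ler_int.
have dR : 0 < d%:R :> R by rewrite ltr0n.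
have emR : m%:~R = t%:~R * d%:R + r%:~R :> R.
  by rewrite {1}ej intrD intrM pmulrn.
rewrite ler_pdivlMr // ltr_pdivrMr // emR intrD mulrDl mul1r.
apply/andP; split; lra.
Qed.

Lemma int_rng (th : R) (m : int) (B : nat) :
  0 <= th -> th < 1 -> 0 <= th + m%:~R -> th + m%:~R < B%:R ->
  0 <= m /\ m < B%:Z.
Proof.
move=> t0 t1 h1 h2; split.
  have : (-1)%:~R < m%:~R :> R by rewrite (_ : (-1)%:~R = -1 :> R) //; lra.
  by rewrite ltr_int; lia.
have : m%:~R < B%:Z%:~R :> R by rewrite -pmulrn; lra.
by rewrite ltr_int.
Qed.

Lemma absz_R (m : int) : 0 <= m -> (absz m)%:R = m%:~R :> R.
Proof. by move=> hm; rewrite pmulrn gez0_abs. Qed.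

Lemma euler_fun0 (x : R) : euler_fun 0 x = (-1) ^ (Num.floor x).
Proof. by rewrite /euler_fun /euler_poly /= mulr1. Qed.

Lemma floor_nat_add (nu : nat) (z : R) (d : nat) : (0 < d)%N ->
  Num.floor ((nu%:R + z) / d%:R) = ((nu%:Z + Num.floor z) %/ d%:Z)%Z.
Proof.
move=> hd; rewrite -(@floor_shift _ d (frac z)) ?frac_ge0 ?frac_lt1 //; congr (Num.floor (_ / _)).
by rewrite /frac intrD pmulrn; ring.
Qed.

Lemma star_conc (b c : nat) (y z : R) (n : nat) :
  (0 < b)%N -> (0 < c)%N -> odd c ->
  \sum_(mu < c) ((-1) ^+ mu * euler_fun 0 ((mu%:R + z) / c%:R)) *
      ((c%:R * frac (b%:R * ((mu%:R + z) / c%:R) + y) + b%:R) ^+ n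
        + (c%:R * frac (b%:R * ((mu%:R + z) / c%:R) + y)) ^+ n)
  - \sum_(nu < b) (euler_fun 0 ((nu%:R + y) / b%:R) * sg (c%:R * ((nu%:R + y) / b%:R) + z)) *
      ((b%:R * frac (c%:R * ((nu%:R + y) / b%:R) + z) + c%:R) ^+ n
        - (b%:R * frac (c%:R * ((nu%:R + y) / b%:R) + z)) ^+ n)
  = 2 * sg z * (b%:R * frac z + c%:R * frac y) ^+ n.
Proof.
move=> hb hc oc.
have bR0 : b%:R != 0 :> R by rewrite pnatr_eq0 -lt0n.
have cR0 : c%:R != 0 :> R by rewrite pnatr_eq0 -lt0n.
have bRp : 0 < b%:R :> R by rewrite ltr0n.
have cRp : 0 < c%:R :> R by rewrite ltr0n.
pose w (mu : 'I_c) := b%:R * ((mu%:R + z) / c%:R) + y.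
pose v (nu : 'I_b) := c%:R * ((nu%:R + y) / b%:R) + z.
set K := b%:R * z + c%:R * y.
set Kf := Num.floor K.
set th := K - Kf%:~R.
have th0 : 0 <= th by apply: frac_ge0.
have th1 : th < 1 by apply: frac_lt1.
set Z0 := Num.floor z; set Y0 := Num.floor y.
pose Ti : int := Kf - b%:Z * Z0 - c%:Z * Y0.
pose W (mu : 'I_c) := Num.floor (w mu).
pose mi (mu : 'I_c) : int := Kf + b%:Z * mu%:Z - c%:Z * W mu.
pose V (nu : 'I_b) := Num.floor (v nu).
pose ni (nu : 'I_b) : int := Kf + c%:Z * nu%:Z - b%:Z * V nu.
have eW : forall mu, c%:R * frac (w mu) = th + (mi mu)%:~R.
  move=> mu; rewrite /frac /mi /th /K /w -/(W mu) !(intrD, intrN, intrM) -!pmulrn.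
  by field.
have eV : forall nu, b%:R * frac (v nu) = th + (ni nu)%:~R.
  move=> nu; rewrite /frac /ni /th /K /v -/(V nu) !(intrD, intrN, intrM) -!pmulrn.
  by field.
have eT : b%:R * frac z + c%:R * frac y = th + Ti%:~R.
  by rewrite /frac /Ti /th /K -/Z0 -/Y0 !(intrD, intrN, intrM) -!pmulrn; ring.
have bW : forall mu, 0 <= mi mu /\ mi mu < c%:Z.
  move=> mu; apply: (@int_rng th _ _ th0 th1); rewrite -eW.
    by apply: mulr_ge0; [apply: ltW | apply: frac_ge0].
  by rewrite -[X in _ < X]mulr1 ltr_pM2l // frac_lt1.
have bV : forall nu, 0 <= ni nu /\ ni nu < b%:Z.
  move=> nu; apply: (@int_rng th _ _ th0 th1); rewrite -eV.
    by apply: mulr_ge0; [apply: ltW | apply: frac_ge0].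
  by rewrite -[X in _ < X]mulr1 ltr_pM2l // frac_lt1.
have bT : 0 <= Ti /\ Ti < (b + c)%N%:Z.
  apply: (@int_rng th _ _ th0 th1); rewrite -eT.
    by apply: addr_ge0; apply: mulr_ge0; rewrite ?ler0n ?frac_ge0.
  rewrite natrD; have := frac_lt1 z; have := frac_lt1 y.
  have := frac_ge0 z; have := frac_ge0 y; nra.
pose eps (mu : 'I_c) := (-1) ^+ mu * euler_fun 0 ((mu%:R + z) / c%:R).
pose del (nu : 'I_b) := euler_fun 0 ((nu%:R + y) / b%:R) * sg (v nu).
have heps : forall mu : 'I_c, eps mu = (-1) ^+ mu * (-1) ^ ((mu%:Z + Z0) %/ c%:Z)%Z.
  by move=> mu; rewrite /eps euler_fun0 floor_nat_add.
have hdel : forall nu : 'I_b, del nu = (-1) ^ ((nu%:Z + Y0) %/ b%:Z)%Z * (-1) ^ (V nu).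
  by move=> nu; rewrite /del euler_fun0 floor_nat_add.
have hm : forall mu : 'I_c, (absz (mi mu))%:Z = (absz Ti)%:Z + b%:Z * (mu%:Z + Z0) + c%:Z * (Y0 - W mu).
  move=> mu; rewrite !gez0_abs; [|by case: bT|by case: (bW mu)].
  by rewrite /mi /Ti; ring.
have hn : forall nu : 'I_b, (absz (ni nu))%:Z = (absz Ti)%:Z + c%:Z * (nu%:Z + Y0) + b%:Z * (Z0 - V nu).
  move=> nu; rewrite !gez0_abs; [|by case: bT|by case: (bV nu)].
  by rewrite /ni /Ti; ring.
have d1 := divA hc oc hm heps.
have d2 := divB hb oc hn hdel.
have hT : (absz Ti < b + c)%N by case: bT => ? ?; lia.
have hmc : forall mu, (absz (mi mu) < c)%N by move=> mu; case: (bW mu) => ? ?; lia.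
have hnb : forall nu, (absz (ni nu) < b)%N by move=> nu; case: (bV nu) => ? ?; lia.
have H := star_abstract th hb hc oc hT hmc hnb d1 d2 n.
rewrite eT -absz_R; last by case: bT.
rewrite -H; congr (_ - _); apply: eq_bigr => i _.
  by rewrite eW absz_R //; case: (bW i).
by rewrite eV absz_R //; case: (bV i).
Qed.

Lemma eqN_mul2 N p p' q q' : eqN N p p' -> eqN N q q' -> eqN N (p * q) (p' * q').
Proof. by move=> h1 h2; apply: eqN_trans (eqN_mulr _ h1) (eqN_mull _ h2). Qed.

Lemma main_thm (b c : nat) (hb : (0 < b)%N) (hc : (0 < c)%N) (hodd : odd c) (q : nat) (y z : R) :
  2 * b%:R * c%:R ^+ q * S3 q b c y z - q%:R * c%:R * b%:R ^+ q * S4 q c b z y =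
  2 * \sum_(h < q.+1) 'C(q, h)%:R * b%:R ^+ (q.+1 - h) * c%:R ^+ h *
        euler_fun (q - h) z * bernoulli_fun h y.
Proof.
set N := q.+2.
set bR : R := b%:R; set cR : R := c%:R.
have bR0 : bR != 0 by rewrite pnatr_eq0 -lt0n.
have cR0 : cR != 0 by rewrite pnatr_eq0 -lt0n.
pose Lp := \poly_(k < N) ((2 * bR * cR ^+ k * S3 k b c y z
                         - k%:R * cR * bR ^+ k * S4 k c b z y) / k`!%:R).
pose Rp := \poly_(k < N) ((2 * \sum_(h < k.+1) 'C(k, h)%:R * bR ^+ (k.+1 - h) * cR ^+ h *
        euler_fun (k - h) z * bernoulli_fun h y) / k`!%:R).
pose PB (x : R) := \poly_(k < N) (cR ^+ k * bernoulli_fun k x / k`!%:R).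
pose PE (x : R) := \poly_(k < N) (bR ^+ k * euler_fun k x / k`!%:R).
pose w (mu : nat) := bR * ((mu%:R + z) / cR) + y.
pose v (nu : nat) := cR * ((nu%:R + y) / bR) + z.
pose eps (mu : 'I_c) := (-1) ^+ mu * euler_fun 0 ((mu%:R + z) / cR).
pose ep (nu : 'I_b) := euler_fun 0 ((nu%:R + y) / bR).
have stepR : eqN N Rp ((2 * bR) *: (PB y * PE z)).
  move=> k hk; rewrite coef_poly hk coefZ coefM mulr_sumr mulr_suml mulr_sumr.
  apply: eq_bigr => [[h /=]]; rewrite ltnS => hh _.
  rewrite !coef_poly (leq_ltn_trans hh hk) (leq_ltn_trans (leq_subr _ _) hk).
  have hbf : 'C(k, h)%:R * (h`!%:R * (k - h)`!%:R) = k`!%:R :> R.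
    by rewrite -natrM -natrM bin_fact.
  have h1 := factR_neq0 R h; have h2 := factR_neq0 R (k - h).
  rewrite subSn // exprS -hbf; field.
  by rewrite h1 h2 pnatr_eq0 -lt0n bin_gt0 hh.
have stepL : eqN N Lp ((2 * bR) *: (\sum_mu eps mu *: PB (w mu))
                      - (cR * bR) *: ('X * \sum_nu ep nu *: PE (v nu))).
  move=> k hk; rewrite coef_poly hk coefB !coefZ coefXM coef_sum mulrBl.
  congr (_ - _).
    rewrite /S3 !mulr_sumr mulr_suml; apply: eq_bigr => mu _.
    rewrite coefZ coef_poly hk /eps /w euler_fun0 -/cR -/bR.
    by field; rewrite factR_neq0.
  case: k hk => [|k] hk /=; first by rewrite !mul0r mulr0.
  rewrite /S4 coef_sum !mulr_sumr mulr_suml; apply: eq_bigr => nu _.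
  rewrite coefZ coef_poly (ltn_trans (ltnSn k) hk) /ep /v euler_fun0 -/cR -/bR.
  rewrite factS natrM exprS.
  have h1 := factR_neq0 R k; have h2 : (k.+1%:R : R) != 0 by rewrite pnatr_eq0.
  by field; rewrite h1 addrC natr1.
set Mx := (ex N cR - 1) * (ex N bR + 1).
have MR : eqN N (Mx * Rp) ((2 * bR * (cR * (2 * sg z))) *: ('X * ex N (cR * frac y + bR * frac z))).
  apply: eqN_trans (eqN_mull _ stepR) _.
  have -> : Mx * ((2 * bR) *: (PB y * PE z)) =
      (2 * bR) *: ((PB y * (ex N cR - 1)) * (PE z * (ex N bR + 1))).
    by rewrite /Mx -!mul_polyC; ring.
  apply: eqN_trans (eqN_scale _ (eqN_mul2 _ _ _ _ _ (pBf_rel N cR y) (pEf_rel N bR z))) _.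
  have -> : (2 * bR) *: (('X * (cR *: ex N (cR * frac y))) * ((2 * sg z) *: ex N (bR * frac z)))
      = (2 * bR * (cR * (2 * sg z))) *: ('X * (ex N (cR * frac y) * ex N (bR * frac z))).
    by rewrite -!mul_polyC !polyCM; ring.
  by apply: eqN_scale; apply: eqN_mull; apply: ex_mul.
have T1 : forall mu : 'I_c, eqN N (Mx * (eps mu *: PB (w mu)))
    ((eps mu * cR) *: ('X * (ex N (cR * frac (w mu) + bR) + ex N (cR * frac (w mu))))).
  move=> mu.
  have -> : Mx * (eps mu *: PB (w mu)) = eps mu *: ((PB (w mu) * (ex N cR - 1)) * (ex N bR + 1)).
    by rewrite /Mx -!mul_polyC; ring.
  apply: eqN_trans (eqN_scale _ (eqN_mulr _ (pBf_rel N cR (w mu)))) _.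
  have -> : eps mu *: (('X * (cR *: ex N (cR * frac (w mu)))) * (ex N bR + 1)) =
     (eps mu * cR) *: ('X * (ex N (cR * frac (w mu)) * ex N bR + ex N (cR * frac (w mu)))).
    by rewrite -!mul_polyC !polyCM; ring.
  apply: eqN_scale; apply: eqN_mull; apply: eqN_add => //; exact: ex_mul.
have T2 : forall nu : 'I_b, eqN N (Mx * ('X * (ep nu *: PE (v nu))))
    ((ep nu * sg (v nu) * 2) *: ('X * (ex N (bR * frac (v nu) + cR) - ex N (bR * frac (v nu))))).
  move=> nu.
  have -> : Mx * ('X * (ep nu *: PE (v nu))) = ep nu *: ('X * ((PE (v nu) * (ex N bR + 1)) * (ex N cR - 1))).
    by rewrite /Mx -!mul_polyC; ring.
  apply: eqN_trans (eqN_scale _ (eqN_mull _ (eqN_mulr _ (pEf_rel N bR (v nu))))) _.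
  have -> : ep nu *: ('X * (((2 * sg (v nu)) *: ex N (bR * frac (v nu))) * (ex N cR - 1))) =
     (ep nu * sg (v nu) * 2) *: ('X * (ex N (bR * frac (v nu)) * ex N cR - ex N (bR * frac (v nu)))).
    by rewrite -!mul_polyC !polyCM; ring.
  apply: eqN_scale; apply: eqN_mull; apply: eqN_sub => //; exact: ex_mul.
set Q := \sum_(mu < c) eps mu *: (ex N (cR * frac (w mu) + bR) + ex N (cR * frac (w mu)))
   - \sum_(nu < b) (ep nu * sg (v nu)) *: (ex N (bR * frac (v nu) + cR) - ex N (bR * frac (v nu))).
have ML : eqN N (Mx * Lp) ((2 * bR * cR) *: ('X * Q)).
  apply: eqN_trans (eqN_mull Mx stepL) _.
  have E1 : Mx * ((2 * bR) *: \sum_mu eps mu *: PB (w mu)) =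
      (2 * bR) *: \sum_mu Mx * (eps mu *: PB (w mu)) by rewrite -scalerAr mulr_sumr.
  have E2 : Mx * ((cR * bR) *: ('X * \sum_nu ep nu *: PE (v nu))) =
      (cR * bR) *: \sum_nu Mx * ('X * (ep nu *: PE (v nu))).
    by rewrite -scalerAr mulr_sumr mulr_sumr.
  rewrite mulrBr E1 E2.
  apply: eqN_trans (eqN_sub (eqN_scale _ (eqN_sum (fun i _ => T1 i))) (eqN_scale _ (eqN_sum (fun i _ => T2 i)))) _.
  apply: eqN_eq; rewrite /Q mulrBr !mulr_sumr scalerBr !scaler_sumr; congr (_ - _).
    by apply: eq_bigr => i _; rewrite -!mul_polyC !polyCM; ring.
  by apply: eq_bigr => i _; rewrite -!mul_polyC !polyCM; ring.
have QS : Q = (2 * sg z) *: ex N (cR * frac y + bR * frac z).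
  apply/polyP => k; rewrite /Q coefB !coef_sum coefZ coef_ex.
  case: (ltnP k N) => hk.
    under eq_bigr do rewrite coefZ coefD !coef_ex hk.
    under [X in _ - X = _]eq_bigr do rewrite coefZ coefB !coef_ex hk.
    transitivity ((\sum_mu eps mu * ((cR * frac (w mu) + bR) ^+ k + (cR * frac (w mu)) ^+ k)
       - \sum_nu (ep nu * sg (v nu)) * ((bR * frac (v nu) + cR) ^+ k - (bR * frac (v nu)) ^+ k))
       / k`!%:R).
      rewrite mulrBl !mulr_suml; congr (_ - _).
        by apply: eq_bigr => i _; ring.
      by apply: eq_bigr => i _; ring.
    by rewrite star_conc // /bR /cR [_ * frac z + _]addrC mulrA.
  have hk' : (k < N)%N = false by rewrite ltnNge hk.
  under eq_bigr do rewrite coefZ coefD !coef_ex hk' addr0 mulr0.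
  under [X in _ - X = _]eq_bigr do rewrite coefZ coefB !coef_ex hk' subrr mulr0.
  by rewrite mulr0 big1 // [X in _ - X]big1 // subrr.
have EQ : (2 * bR * cR) *: ('X * Q) =
    (2 * bR * (cR * (2 * sg z))) *: ('X * ex N (cR * frac y + bR * frac z)).
  by rewrite QS -scalerAr scalerA; congr (_ *: _); ring.
have Z : eqN N (Mx * (Lp - Rp)) 0.
  by move=> k hk; rewrite mulrBr coefB ML // MR // EQ subrr coef0.
have M0 : Mx`_0 = 0.
  by rewrite /Mx coefM big_ord1 coefB coef1 coef_ex /= expr0 fact0 invr1 mulr1 subrr mul0r.
have M1 : Mx`_1 != 0.
  rewrite /Mx coefM big_ord_recr big_ord1 /= !coefB !coefD coef1 !coef_ex /=.
  rewrite !coef1 /= !subn0 subnn !expr0 !expr1 ?fact0 ?fact1 !invr1 !mulr1 subrr mul0r add0r subr0.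
  by rewrite mulf_neq0 // (_ : 1 + 1 = 2%:R) // pnatr_eq0.
have C := eqN_cancel _ _ _ M0 M1 Z.
have := C q (ltnSn q); rewrite coefB coef0 !coef_poly (ltn_trans (ltnSn q) (ltnSn q.+1)).
move/eqP; rewrite subr_eq0 => /eqP E.
have := congr1 (fun t => t * q`!%:R) E; rewrite /= !divfK ?factR_neq0 //.
Qed.

End P4.

Theorem corollary4 (R : realType) (b c : nat) (hb : (0 < b)%N) (hc : (0 < c)%N)
  (hbc : coprime b c) (hodd : odd c) (q : nat) (hq : (1 <= q)%N) (y z : R) :
  2 * b%:R * c%:R ^+ q * S3 q b c y z - q%:R * c%:R * b%:R ^+ q * S4 q c b z y =
  2 * \sum_(h < q.+1) 'C(q, h)%:R * b%:R ^+ (q.+1 - h) * c%:R ^+ h *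
        euler_fun (q - h) z * bernoulli_fun h y.
Proof. exact: main_thm. Qed.
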